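(* Let $\epsilon:B\to A$ (with section $j$) be a local augmentation; regard $A\subset B$ via $j$, let $I=\ker(\epsilon)$, and let $B^\bullet$ denote the group of units of $B$. For a subset $S\subset B\times B$ such that $1+ba\in B^\bullet$ for all $(a,b)\in S$, put $$C(S)=\epsilon^{-1}(1)\cap\langle(1+ab)(1+ba)^{-1}\mid(a,b)\in S\rangle .$$ Then: 1. $C(\{(a,b):\epsilon(a)=0\})=C(\{(a,b):\epsilon(ab)=\epsilon(ba)=0\})=C(\{(a,b):\epsilon(ba)=0\})=C(\{(a,b):1+ba\in B^\bullet\})$. 2. $[B^\bullet,B^\bullet]\cap\epsilon^{-1}(1)=C(\{(a,b):b\in B^\bullet,\ 1+ba\in B^\bullet\})$. 3. $[\epsilon^{-1}(1),\epsilon^{-1}(1)]=C(\{(a,b):\epsilon(a)=0,\ \epsilon(b)=\zeta\})$ for any $\zeta\in A$ which commutes with every element of $I$. In particular, $$[\epsilon^{-1}(1),\epsilon^{-1}(1)]\subset[B^\bullet,B^\bullet]\cap\epsilon^{-1}(1)\subset C:=C(\{(a,b):\epsilon(ab)=\epsilon(ba)=0\}),$$ and $C$ is a normal subgroup of $\epsilon^{-1}(1)$ with abelian quotient.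
   Context: Rings are associative with $1$. An augmentation is a pair of ring homomorphisms $\epsilon:B\to A$, $j:A\to B$ with $\epsilon j=\mathrm{id}_A$; it is a local augmentation if every square matrix $\alpha$ over $B$ with $\epsilon(\alpha)$ invertible is itself invertible. $\langle\cdot\rangle$ denotes the subgroup of $B^\bullet$ generated, and $[G,G]$ the commutator subgroup. (In each listed set $S$ the condition $1+ba\in B^\bullet$ holds automatically by locality, or is imposed.) *)

(* Defs.v *)
From HB Require Import structures.
From mathcomp Require Import all_boot all_order all_algebra.
Set Implicit Arguments. Unset Strict Implicit. Unset Printing Implicit Defensive.
Import GRing.Theory.
Local Open Scope ring_scope.

Definition mx_invertible (R : nzRingType) (n : nat) (M : 'M[R]_n) : Prop :=
  exists N : 'M[R]_n, M *m N = 1%:M /\ N *m M = 1%:M.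

Definition augmentation (A : nzRingType) (B : unitRingType)
  (eps : {rmorphism B -> A}) (j : {rmorphism A -> B}) : Prop :=
  forall a : A, eps (j a) = a.

Definition local_augmentation (A : nzRingType) (B : unitRingType)
  (eps : {rmorphism B -> A}) (j : {rmorphism A -> B}) : Prop :=
  augmentation eps j /\
  forall (n : nat) (M : 'M[B]_n),
    mx_invertible (map_mx eps M) -> mx_invertible M.

Inductive gen (B : unitRingType) (P : B -> Prop) : B -> Prop :=
| gen1 : gen P 1
| genP x : P x -> gen P x
| genM x y : gen P x -> gen P y -> gen P (x * y)
| genV x : gen P x -> gen P x^-1.

Definition commutator_subgroup (B : unitRingType) (G : B -> Prop) : B -> Prop :=
  gen (fun z => exists x y, G x /\ G y /\ z = x^-1 * y^-1 * x * y).

Definition units_of (B : unitRingType) : B -> Prop := fun x => x \is a GRing.unit.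

Definition eps1 (A : nzRingType) (B : unitRingType) (eps : {rmorphism B -> A})
  : B -> Prop := fun x => eps x = 1.

Definition Cset (A : nzRingType) (B : unitRingType) (eps : {rmorphism B -> A})
  (S : B -> B -> Prop) : B -> Prop :=
  fun x => eps x = 1 /\
    gen (fun y => exists a b, S a b /\ y = (1 + a * b) * (1 + b * a)^-1) x.

Definition set_eq (B : Type) (P Q : B -> Prop) : Prop := forall x, P x <-> Q x.
Definition set_sub (B : Type) (P Q : B -> Prop) : Prop := forall x, P x -> Q x.

(* Main.v *)
Require Import Defs.
From HB Require Import structures.
From mathcomp Require Import all_boot all_order all_algebra.
Import GRing.Theory.
Set Implicit Arguments. Unset Strict Implicit. Unset Printing Implicit Defensive.
Local Open Scope ring_scope.

Definition gg (B : unitRingType) (a b : B) := (1 + a * b) * (1 + b * a)^-1.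
Definition cj (B : unitRingType) (u x : B) := u^-1 * x * u.

Lemma unitM2 (B : unitRingType) (x y : B) :
  x \is a GRing.unit -> y \is a GRing.unit -> x * y \is a GRing.unit.
Proof. by move=> hx hy; rewrite unitrMl. Qed.

Lemma inv_uniq (B : unitRingType) (x y : B) :
  x * y = 1 -> y * x = 1 -> x \is a GRing.unit /\ x^-1 = y.
Proof.
move=> h1 h2; have hx : x \is a GRing.unit by apply/unitrP; exists y.
by split=> //; rewrite -(mulKr hx y) h1 mulr1.
Qed.

Lemma swapL (B : unitRingType) (a b : B) : (1 + a*b) * a = a * (1 + b*a).
Proof. by rewrite mulrDl mul1r mulrDr mulr1 mulrA. Qed.

Lemma swapR (B : unitRingType) (a b : B) : b * (1 + a*b) = (1 + b*a) * b.
Proof. by rewrite mulrDr mulr1 mulrDl mul1r mulrA. Qed.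

Lemma unit_swap (B : unitRingType) (a b : B) :
  (1 + b*a) \is a GRing.unit -> (1 + a*b) \is a GRing.unit.
Proof.
move=> hv; apply/unitrP; exists (1 - a * (1+b*a)^-1 * b); split.
  by rewrite mulrBl mul1r -!mulrA swapR (mulKr hv) addrK.
by rewrite mulrBr mulr1 !mulrA swapL (mulrK hv) addrK.
Qed.

Lemma cjM (B : unitRingType) (u x y : B) : u \is a GRing.unit ->
  cj u (x * y) = cj u x * cj u y.
Proof. by move=> hu; rewrite /cj !mulrA (mulrK hu). Qed.

Lemma cjD (B : unitRingType) (u x y : B) : cj u (x + y) = cj u x + cj u y.
Proof. by rewrite /cj mulrDr mulrDl. Qed.

Lemma cj1 (B : unitRingType) (u : B) : u \is a GRing.unit -> cj u 1 = 1.
Proof. by move=> hu; rewrite /cj mulr1 mulVr. Qed.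

Lemma cj_unit (B : unitRingType) (u x : B) : u \is a GRing.unit ->
  x \is a GRing.unit -> cj u x \is a GRing.unit.
Proof. by move=> hu hx; rewrite /cj !unitM2 // unitrV. Qed.

Lemma cjV (B : unitRingType) (u x : B) : u \is a GRing.unit ->
  x \is a GRing.unit -> cj u x^-1 = (cj u x)^-1.
Proof.
move=> hu hx.
have h1 : cj u x * cj u x^-1 = 1 by rewrite -cjM // mulrV // cj1.
have h2 : cj u x^-1 * cj u x = 1 by rewrite -cjM // mulVr // cj1.
by have [_ ->] := inv_uniq h1 h2.
Qed.

Lemma cjg (B : unitRingType) (u a b : B) : u \is a GRing.unit ->
  (1 + b * a) \is a GRing.unit -> cj u (gg a b) = gg (cj u a) (cj u b).
Proof.
move=> hu hv; rewrite /gg cjM // cjV // cjD cj1 // cjM // cjD cj1 // cjM //.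
Qed.

Lemma gginv (B : unitRingType) (a b : B) :
  (1 + b * a) \is a GRing.unit -> (gg b a)^-1 = gg a b.
Proof.
move=> hv; have hu := unit_swap hv.
by rewrite /gg invrM ?unitrV // invrK.
Qed.

Lemma ggP1 (B : unitRingType) (a a1 b : B) :
  (1 + b * a) \is a GRing.unit -> (1 + b * (a + a1)) \is a GRing.unit ->
  (1 + b * ((1 + a*b)^-1 * a1)) \is a GRing.unit ->
  gg (a + a1) b = cj ((1 + a*b)^-1) (gg ((1 + a*b)^-1 * a1) b) * gg a b.
Proof.
move=> hv hw ht; have hu := unit_swap hv.
have e1 : 1 + (a + a1) * b = (1 + a*b) * (1 + ((1 + a*b)^-1 * a1) * b).
  by rewrite [RHS]mulrDr mulr1 !mulrA (mulrV hu) mul1r mulrDl addrA.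
have e2 : 1 + b * (a + a1) = (1 + b*a) * (1 + b * ((1 + a*b)^-1 * a1)).
  by rewrite [RHS]mulrDr mulr1 !mulrA -swapR (mulrK hu) mulrDr addrA.
rewrite /gg e1 e2 invrM // /cj invrK !mulrA (mulrVK hu).
done.
Qed.

Lemma ggcomm (B : unitRingType) (a b : B) : b \is a GRing.unit ->
  (1 + b * a) \is a GRing.unit ->
  gg a b = b^-1 * ((1 + b*a)^-1)^-1 * b * (1 + b*a)^-1.
Proof.
move=> hb hv; rewrite invrK /gg.
have -> : 1 + a * b = b^-1 * (1 + b*a) * b.
  by rewrite -mulrA -swapR (mulKr hb).
done.
Qed.

Lemma commgg (B : unitRingType) (x y : B) : x \is a GRing.unit ->
  y \is a GRing.unit ->
  (1 + x * (x^-1 * (y^-1 - 1)) = y^-1) /\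
  x^-1 * y^-1 * x * y = gg (x^-1 * (y^-1 - 1)) x.
Proof.
move=> hx hy.
have e : 1 + x * (x^-1 * (y^-1 - 1)) = y^-1.
  by rewrite mulrA (mulrV hx) mul1r addrC subrK.
split=> //; rewrite ggcomm // e. rewrite !(invrK y).
  by [].
by rewrite unitrV.
Qed.

Lemma ggshift (B : unitRingType) (a b z : B) : a * z = z * a ->
  (1 + z * a) \is a GRing.unit -> (1 + (z + b) * a) \is a GRing.unit ->
  gg a (z + b) = gg a (b * (1 + z * a)^-1).
Proof.
move=> hz hu hw; set u := 1 + z * a.
have hua : u * a = a * u.
  by rewrite /u mulrDl mulrDr mul1r mulr1 mulrA hz.
have hua' : u^-1 * a = a * u^-1.
  apply: (mulrI hu); rewrite mulrA (mulrV hu) mul1r mulrA hua.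
  by rewrite (mulrK hu).
have e1 : 1 + a * (z + b) = u + a * b by rewrite mulrDr addrA hz.
have e2 : 1 + (z + b) * a = u + b * a by rewrite mulrDl addrA.
have e3 : 1 + a * (b * u^-1) = (u + a * b) * u^-1.
  by rewrite mulrDl (mulrV hu) mulrA.
have e4 : 1 + (b * u^-1) * a = (u + b * a) * u^-1.
  by rewrite -mulrA hua' mulrA mulrDl (mulrV hu).
have hw' : (u + b * a) \is a GRing.unit by rewrite -e2.
rewrite /gg e1 e2 e3 e4 invrM ?unitrV // invrK !mulrA (mulrVK hu).
done.
Qed.

Lemma gen_mono (B : unitRingType) (P Q : B -> Prop) x :
  (forall y, P y -> gen Q y) -> gen P x -> gen Q x.
Proof.
move=> hPQ; elim=> [|y /hPQ //|y z _ hy _ hz|y _ hy].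
- exact: gen1.
- exact: genM.
- exact: genV.
Qed.

Lemma gen_unit (B : unitRingType) (P : B -> Prop) x :
  (forall y, P y -> y \is a GRing.unit) -> gen P x -> x \is a GRing.unit.
Proof.
move=> hP; elim=> [|y /hP //|y z _ hy _ hz|y _ hy].
- exact: unitr1.
- exact: unitM2.
- by rewrite unitrV.
Qed.

Lemma gen_cj (B : unitRingType) (P : B -> Prop) u x :
  (forall y, P y -> P (cj u y)) -> (forall y, P y -> y \is a GRing.unit) ->
  u \is a GRing.unit -> gen P x -> gen P (cj u x).
Proof.
move=> hc hP hu; elim=> [|y /hc /genP //|y z _ hy _ hz|y hy1 hy].
- by rewrite cj1 //; exact: gen1.
- by rewrite cjM //; exact: genM.
- by rewrite cjV //; [exact: genV | exact: gen_unit hy1].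
Qed.

Lemma loc_unit (A : nzRingType) (B : unitRingType)
  (eps : {rmorphism B -> A}) (j : {rmorphism A -> B}) :
  local_augmentation eps j -> forall (x : B) (y : A),
  eps x * y = 1 -> y * eps x = 1 -> x \is a GRing.unit.
Proof.
move=> [_ hloc] x y h1 h2.
have [N [hN1 hN2]] : mx_invertible (\matrix_(i < 1, k < 1) x).
  apply: hloc; exists (\matrix_(i < 1, k < 1) y).
  split; apply/matrixP => i k; rewrite !mxE big_ord1 !mxE (ord1 i) (ord1 k) eqxx /=;
    by [rewrite h1 | rewrite h2].
have e1 := congr1 (fun m : 'M[B]_1 => m ord0 ord0) hN1.
have e2 := congr1 (fun m : 'M[B]_1 => m ord0 ord0) hN2.
move: e1 e2; rewrite /= !mxE !big_ord1 !mxE /= => e1 e2.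
by apply/unitrP; exists (N ord0 ord0).
Qed.

Lemma loc_unit1 (A : nzRingType) (B : unitRingType)
  (eps : {rmorphism B -> A}) (j : {rmorphism A -> B}) :
  local_augmentation eps j -> forall x : B, eps x = 1 -> x \is a GRing.unit.
Proof. by move=> hl x hx; apply: (loc_unit hl (y := 1)); rewrite hx mulr1. Qed.

Lemma loc_unit_eq (A : nzRingType) (B : unitRingType)
  (eps : {rmorphism B -> A}) (j : {rmorphism A -> B}) :
  local_augmentation eps j -> forall x x' : B, x \is a GRing.unit ->
  eps x' = eps x -> x' \is a GRing.unit.
Proof.
move=> hl x x' hx e; apply: (loc_unit hl (y := eps x^-1)).
  by rewrite e -rmorphM mulrV // rmorph1.
by rewrite e -rmorphM mulVr // rmorph1.
Qed.

Lemma epsV1 (A : nzRingType) (B : unitRingType) (eps : {rmorphism B -> A}) (x : B) :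
  x \is a GRing.unit -> eps x = 1 -> eps x^-1 = 1.
Proof.
move=> hx e; rewrite -[eps x^-1]mul1r -{1}e -rmorphM mulrV // rmorph1 //.
Qed.

Lemma phi_unit (A : nzRingType) (B : unitRingType)
  (eps : {rmorphism B -> A}) (j : {rmorphism A -> B}) (x : B) :
  x \is a GRing.unit ->
  j (eps x) \is a GRing.unit /\ (j (eps x))^-1 = j (eps x^-1).
Proof.
move=> hx; apply: inv_uniq.
  by rewrite -!rmorphM mulrV // !rmorph1.
by rewrite -!rmorphM mulVr // !rmorph1.
Qed.

Definition GS (B : unitRingType) (S : B -> B -> Prop) (y : B) :=
  exists a b, S a b /\ y = gg a b.

Lemma G1unit (A : nzRingType) (B : unitRingType)
  (eps : {rmorphism B -> A}) (j : {rmorphism A -> B}) :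
  local_augmentation eps j -> forall y,
  GS (fun a b => eps (b * a) = 0) y -> y \is a GRing.unit.
Proof.
move=> hl y [a [b [ea ->]]].
have hv : (1 + b * a) \is a GRing.unit.
  by apply: (loc_unit1 hl); rewrite rmorphD rmorph1 ea addr0.
by rewrite /gg unitM2 ?unitrV // unit_swap.
Qed.

Lemma G1cj (A : nzRingType) (B : unitRingType)
  (eps : {rmorphism B -> A}) (j : {rmorphism A -> B}) :
  local_augmentation eps j -> forall u y, u \is a GRing.unit ->
  GS (fun a b => eps a = 0) y -> GS (fun a b => eps a = 0) (cj u y).
Proof.
move=> hl u y hu [a [b [ea ->]]].
have hv : (1 + b * a) \is a GRing.unit.
  by apply: (loc_unit1 hl); rewrite rmorphD rmorph1 rmorphM ea mulr0 addr0.
exists (cj u a), (cj u b); split; last exact: cjg.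
by rewrite /cj !rmorphM ea mulr0 mul0r.
Qed.

Lemma Ncj (A : nzRingType) (B : unitRingType)
  (eps : {rmorphism B -> A}) (j : {rmorphism A -> B}) :
  local_augmentation eps j -> forall u x, u \is a GRing.unit ->
  gen (GS (fun a b => eps a = 0)) x -> gen (GS (fun a b => eps a = 0)) (cj u x).
Proof.
move=> hl u x hu; apply: gen_cj => //.
  by move=> y; exact: (G1cj hl hu).
move=> y [a [b [ea ey]]]; apply: (G1unit hl); exists a, b; split=> //.
by rewrite rmorphM ea mulr0.
Qed.

Lemma Nunit (A : nzRingType) (B : unitRingType)
  (eps : {rmorphism B -> A}) (j : {rmorphism A -> B}) :
  local_augmentation eps j -> forall x,
  gen (GS (fun a b => eps a = 0)) x -> x \is a GRing.unit.
Proof.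
move=> hl x; apply: gen_unit.
move=> y [a [b [ea ey]]]; apply: (G1unit hl); exists a, b; split=> //.
by rewrite rmorphM ea mulr0.
Qed.

Lemma P1 (A : nzRingType) (B : unitRingType)
  (eps : {rmorphism B -> A}) (j : {rmorphism A -> B}) :
  local_augmentation eps j -> forall a a1 b : B,
  (1 + b * a) \is a GRing.unit -> eps a1 = 0 ->
  exists n, gen (GS (fun a b => eps a = 0)) n /\ gg (a + a1) b = n * gg a b.
Proof.
move=> hl a a1 b hv ea1; have hu := unit_swap hv.
have hw : (1 + b * (a + a1)) \is a GRing.unit.
  by apply: (loc_unit_eq hl hv); rewrite !rmorphD !rmorphM rmorphD ea1 addr0.
have ht : (1 + b * ((1 + a*b)^-1 * a1)) \is a GRing.unit.
  by apply: (loc_unit1 hl); rewrite rmorphD rmorph1 !rmorphM ea1 !mulr0 addr0.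
exists (cj ((1 + a*b)^-1) (gg ((1 + a*b)^-1 * a1) b)); split; last exact: ggP1.
apply: (Ncj hl); first by rewrite unitrV.
apply: genP; exists ((1 + a*b)^-1 * a1), b; split=> //.
by rewrite rmorphM ea1 mulr0.
Qed.

Lemma P2 (A : nzRingType) (B : unitRingType)
  (eps : {rmorphism B -> A}) (j : {rmorphism A -> B}) :
  local_augmentation eps j -> forall a b b1 : B,
  (1 + b * a) \is a GRing.unit -> eps b1 = 0 ->
  exists n, gen (GS (fun a b => eps a = 0)) n /\ gg a (b + b1) = n * gg a b.
Proof.
move=> hl a b b1 hv eb1; have hu := unit_swap hv.
have [n' [hn' e]] := P1 hl hu eb1.
have hw : (1 + (b + b1) * a) \is a GRing.unit.
  by apply: (loc_unit_eq hl hv); rewrite !rmorphD !rmorphM rmorphD eb1 addr0.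
have hg : gg a b \is a GRing.unit by rewrite /gg unitM2 ?unitrV.
have hg' : gg b a \is a GRing.unit by rewrite /gg unitM2 ?unitrV.
have hn'u := Nunit hl hn'.
exists (cj ((gg a b)^-1) (n'^-1)); split.
  by apply: (Ncj hl); [rewrite unitrV | exact: genV].
rewrite -gginv // e invrM // gginv // /cj invrK (mulrVK hg) //.
Qed.

Lemma Qlem (A : nzRingType) (B : unitRingType)
  (eps : {rmorphism B -> A}) (j : {rmorphism A -> B}) :
  local_augmentation eps j -> forall x,
  gen (GS (fun a b => (1 + b * a) \is a GRing.unit)) x ->
  x \is a GRing.unit /\
  gen (GS (fun a b => eps a = 0)) (x * (j (eps x))^-1).
Proof.
move=> hl x; elim=> [|y [a [b [hv ->]]]|x1 y _ [hx hnx] _ [hy hny]|y _ [hy hny]].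
- by rewrite !rmorph1 invr1 mulr1; split; [exact: unitr1 | exact: gen1].
- have hu := unit_swap hv.
  have hg : gg a b \is a GRing.unit by rewrite /gg unitM2 ?unitrV.
  split=> //.
  have aug := hl.1.
  have e : j (eps (gg a b)) = gg (j (eps a)) (j (eps b)).
    rewrite /gg !rmorphM -(phi_unit _ _ hv).2 !rmorphD !rmorph1 !rmorphM //.
  have hv0 : (1 + j (eps b) * j (eps a)) \is a GRing.unit.
    by apply: (loc_unit_eq hl hv); rewrite !rmorphD !rmorph1 !rmorphM !aug.
  have hv1 : (1 + b * j (eps a)) \is a GRing.unit.
    by apply: (loc_unit_eq hl hv); rewrite !rmorphD !rmorph1 !rmorphM !aug.
  have ea1 : eps (a - j (eps a)) = 0 by rewrite rmorphB aug subrr.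
  have eb1 : eps (b - j (eps b)) = 0 by rewrite rmorphB aug subrr.
  have [n1 [hn1 e1]] := P1 hl hv1 ea1.
  have [n2 [hn2 e2]] := P2 hl hv0 eb1.
  move: e1 e2; rewrite addrC subrK addrC subrK => e1 e2.
  have hg0 : gg (j (eps a)) (j (eps b)) \is a GRing.unit.
    by rewrite /gg unitM2 ?unitrV // unit_swap.
  rewrite e e1 e2 mulrA (mulrK hg0); exact: genM.
- have [hjx _] := phi_unit eps j hx.
  have [hjy _] := phi_unit eps j hy.
  split; first exact: unitM2.
  have -> : x1 * y * (j (eps (x1 * y)))^-1 =
     cj x1^-1 (y * (j (eps y))^-1) * (x1 * (j (eps x1))^-1).
    by rewrite !rmorphM invrM // /cj invrK !mulrA (mulrVK hx).
  by apply: genM => //; apply: (Ncj hl) => //; rewrite unitrV.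
- have [hjy e] := phi_unit eps j hy.
  split; first by rewrite unitrV.
  have -> : y^-1 * (j (eps y^-1))^-1 = cj y ((y * (j (eps y))^-1)^-1).
    by rewrite -e invrK /cj invrM ?unitrV // invrK !mulrA (mulrVK hy).
  by apply: (Ncj hl) => //; exact: genV.
Qed.

Lemma key (A : nzRingType) (B : unitRingType)
  (eps : {rmorphism B -> A}) (j : {rmorphism A -> B}) :
  local_augmentation eps j -> forall x,
  Cset eps (fun a b => (1 + b * a) \is a GRing.unit) x ->
  Cset eps (fun a b => eps a = 0) x.
Proof.
move=> hl x [ex hx]; split=> //.
have [_ h] := Qlem hl hx.
by move: h; rewrite ex rmorph1 invr1 mulr1.
Qed.

Lemma G5toG0 (A : nzRingType) (B : unitRingType)
  (eps : {rmorphism B -> A}) (j : {rmorphism A -> B}) :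
  local_augmentation eps j -> forall zeta : A,
  (forall i : B, eps i = 0 -> j zeta * i = i * j zeta) -> forall y,
  GS (fun a b => eps a = 0 /\ eps b = zeta) y ->
  GS (fun a b => eps a = 0 /\ eps b = 0) y.
Proof.
move=> hl zeta hz y [a [b [[ea eb] ->]]].
have aug := hl.1.
have hu : (1 + j zeta * a) \is a GRing.unit.
  by apply: (loc_unit1 hl); rewrite rmorphD rmorph1 rmorphM ea mulr0 addr0.
have hw : (1 + (j zeta + (b - j zeta)) * a) \is a GRing.unit.
  by apply: (loc_unit1 hl); rewrite rmorphD rmorph1 rmorphM ea mulr0 addr0.
exists a, ((b - j zeta) * (1 + j zeta * a)^-1); split.
  by split=> //; rewrite rmorphM rmorphB aug eb subrr mul0r.
rewrite -ggshift //; first by rewrite addrC subrK.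
by rewrite hz.
Qed.

Lemma G0toG5 (A : nzRingType) (B : unitRingType)
  (eps : {rmorphism B -> A}) (j : {rmorphism A -> B}) :
  local_augmentation eps j -> forall zeta : A,
  (forall i : B, eps i = 0 -> j zeta * i = i * j zeta) -> forall y,
  GS (fun a b => eps a = 0 /\ eps b = 0) y ->
  GS (fun a b => eps a = 0 /\ eps b = zeta) y.
Proof.
move=> hl zeta hz y [a [b [[ea eb] ->]]].
have aug := hl.1.
have hu : (1 + j zeta * a) \is a GRing.unit.
  by apply: (loc_unit1 hl); rewrite rmorphD rmorph1 rmorphM ea mulr0 addr0.
have hw : (1 + (j zeta + b * (1 + j zeta * a)) * a) \is a GRing.unit.
  by apply: (loc_unit1 hl); rewrite rmorphD rmorph1 rmorphM ea mulr0 addr0.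
exists a, (j zeta + b * (1 + j zeta * a)); split.
  by split=> //; rewrite rmorphD rmorphM eb mul0r aug addr0.
rewrite ggshift //; first by rewrite (mulrK hu).
by rewrite hz.
Qed.

Lemma G51toE (A : nzRingType) (B : unitRingType)
  (eps : {rmorphism B -> A}) (j : {rmorphism A -> B}) :
  local_augmentation eps j -> forall y,
  GS (fun a b => eps a = 0 /\ eps b = 1) y ->
  exists x z, eps1 eps x /\ eps1 eps z /\ y = x^-1 * z^-1 * x * z.
Proof.
move=> hl y [a [b [[ea eb] ->]]].
have hb := loc_unit1 hl eb.
have ev : eps (1 + b * a) = 1 by rewrite rmorphD rmorph1 rmorphM ea mulr0 addr0.
have hv := loc_unit1 hl ev.
exists b, ((1 + b * a)^-1); split=> //; split; first exact: epsV1.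
exact: ggcomm.
Qed.

Lemma EtoG51 (A : nzRingType) (B : unitRingType)
  (eps : {rmorphism B -> A}) (j : {rmorphism A -> B}) :
  local_augmentation eps j -> forall y,
  (exists x z, eps1 eps x /\ eps1 eps z /\ y = x^-1 * z^-1 * x * z) ->
  GS (fun a b => eps a = 0 /\ eps b = 1) y.
Proof.
move=> hl y [x [z [ex [ez ->]]]].
have hx := loc_unit1 hl ex; have hz := loc_unit1 hl ez.
have [_ e] := commgg hx hz.
exists (x^-1 * (z^-1 - 1)), x; split=> //; split=> //.
by rewrite rmorphM rmorphB rmorph1 (epsV1 hz ez) subrr mulr0.
Qed.

Lemma G6toU (B : unitRingType) y :
  GS (fun a b => b \is a GRing.unit /\ (1 + b * a) \is a GRing.unit) y ->
  exists x z : B, units_of x /\ units_of z /\ y = x^-1 * z^-1 * x * z.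
Proof.
move=> [a [b [[hb hv] ->]]].
exists b, ((1 + b * a)^-1); split=> //; split; first by rewrite /units_of unitrV.
exact: ggcomm.
Qed.

Lemma UtoG6 (B : unitRingType) y :
  (exists x z : B, units_of x /\ units_of z /\ y = x^-1 * z^-1 * x * z) ->
  GS (fun a b => b \is a GRing.unit /\ (1 + b * a) \is a GRing.unit) y.
Proof.
move=> [x [z [hx [hz ->]]]].
have [e1 e] := commgg hx hz.
exists (x^-1 * (z^-1 - 1)), x; split=> //; split=> //.
by rewrite e1 unitrV.
Qed.

Lemma gen_E (A : nzRingType) (B : unitRingType) (eps : {rmorphism B -> A})
  (P : B -> Prop) x :
  (forall y, P y -> y \is a GRing.unit /\ eps y = 1) -> gen P x ->
  x \is a GRing.unit /\ eps x = 1.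
Proof.
move=> hP; elim=> [|y /hP //|y z _ [hy ey] _ [hz ez]|y _ [hy ey]].
- by rewrite rmorph1; split=> //; exact: unitr1.
- by rewrite rmorphM ey ez mulr1; split=> //; exact: unitM2.
- by rewrite unitrV; split=> //; exact: epsV1.
Qed.

Lemma Cset_mono (A : nzRingType) (B : unitRingType) (eps : {rmorphism B -> A})
  (S S' : B -> B -> Prop) x :
  (forall a b, S a b -> S' a b) -> Cset eps S x -> Cset eps S' x.
Proof.
move=> hS [ex hx]; split=> //; apply: gen_mono hx => y [a [b [hab ->]]].
by apply: genP; exists a, b; split=> //; apply: hS.
Qed.

Theorem proposition3p4 (A : nzRingType) (B : unitRingType)
  (eps : {rmorphism B -> A}) (j : {rmorphism A -> B}) :
  local_augmentation eps j ->
  let C := Cset eps (fun a b => eps (a * b) = 0 /\ eps (b * a) = 0) in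
  let E := eps1 eps in
  (* part 1 *)
  (set_eq (Cset eps (fun a b => eps a = 0)) C /\
   set_eq C (Cset eps (fun a b => eps (b * a) = 0)) /\
   set_eq (Cset eps (fun a b => eps (b * a) = 0))
          (Cset eps (fun a b => (1 + b * a) \is a GRing.unit))) /\
  (* part 2 *)
  set_eq (fun x => commutator_subgroup (@units_of B) x /\ E x)
         (Cset eps (fun a b => b \is a GRing.unit /\ (1 + b * a) \is a GRing.unit)) /\
  (* part 3 *)
  (forall zeta : A, (forall i : B, eps i = 0 -> j zeta * i = i * j zeta) ->
     set_eq (commutator_subgroup E)
            (Cset eps (fun a b => eps a = 0 /\ eps b = zeta))) /\
  (* in particular *)
  set_sub (commutator_subgroup E) (fun x => commutator_subgroup (@units_of B) x /\ E x) /\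
  set_sub (fun x => commutator_subgroup (@units_of B) x /\ E x) C /\
  (* C is a normal subgroup of E with abelian quotient *)
  set_sub C E /\ C 1 /\
  (forall x y, C x -> C y -> C (x * y)) /\ (forall x, C x -> C x^-1) /\
  (forall x c, E x -> C c -> C (x^-1 * c * x)) /\
  (forall x y, E x -> E y -> C ((x * y)^-1 * (y * x))).
Proof.
move=> hl; cbv zeta.
have aug := hl.1.
have u4 : forall a b : B, eps (b * a) = 0 -> (1 + b * a) \is a GRing.unit.
  by move=> a b h; apply: (loc_unit1 hl); rewrite rmorphD rmorph1 h addr0.
have C4to1 := key hl.
have s12 : forall a b : B, eps a = 0 -> eps (a * b) = 0 /\ eps (b * a) = 0.
  by move=> a b h; rewrite !rmorphM h mulr0 mul0r.
have h1 : forall i : B, eps i = 0 -> j 1 * i = i * j 1.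
  by move=> i _; rewrite rmorph1 mul1r mulr1.
have hEgen : forall y : B, (exists x z, eps1 eps x /\ eps1 eps z /\
    y = x^-1 * z^-1 * x * z) -> y \is a GRing.unit /\ eps y = 1.
  move=> y [x [z [ex [ez ->]]]].
  have hx := loc_unit1 hl ex; have hz := loc_unit1 hl ez.
  split; first by rewrite !unitM2 ?unitrV.
  by rewrite !rmorphM (epsV1 hx ex) (epsV1 hz ez) ex ez !mulr1.
have p2 : set_eq (fun x => commutator_subgroup (@units_of B) x /\ eps1 eps x)
         (Cset eps (fun a b => b \is a GRing.unit /\ (1 + b * a) \is a GRing.unit)).
  move=> x; split=> [[hc he]|[he hg]].
    by split=> //; apply: gen_mono hc => y hy; apply: genP; exact: UtoG6.
  by split=> //; apply: gen_mono hg => y hy; apply: genP; exact: G6toU.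
have ip1 : set_sub (commutator_subgroup (eps1 eps))
    (fun x => commutator_subgroup (@units_of B) x /\ eps1 eps x).
  move=> x hc; split; last exact: (gen_E hEgen hc).2.
  apply: gen_mono hc => y [x' [z [ex [ez ->]]]]; apply: genP.
  by exists x', z; split; [exact: (loc_unit1 hl ex) | split; [exact: (loc_unit1 hl ez)|]].
have ip2 : set_sub (fun x => commutator_subgroup (@units_of B) x /\ eps1 eps x)
   (Cset eps (fun a b => eps (a * b) = 0 /\ eps (b * a) = 0)).
  move=> x /p2 h; apply: (Cset_mono (S := fun a b => eps a = 0)) => //.
  by apply: C4to1; apply: Cset_mono h => a b [].
have Cunit : forall x, Cset eps (fun a b => eps (a * b) = 0 /\ eps (b * a) = 0) x ->
    x \is a GRing.unit.
  move=> x [_ hx]; apply: gen_unit hx => y [a [b [[_ h] ->]]].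
  by apply: (G1unit hl); exists a, b.
split; [split; [|split]|split; [|split; [|split; [|split; [|split; [|split; [|split; [|split; [|split]]]]]]]]].
- move=> x; split; first by apply: Cset_mono.
  by move=> h; apply: C4to1; apply: Cset_mono h => a b [_ h']; exact: u4.
- move=> x; split; first by apply: Cset_mono => a b [].
  move=> h; apply: (Cset_mono (S := fun a b => eps a = 0)) => //.
  by apply: C4to1; apply: Cset_mono h.
- move=> x; split; first by apply: Cset_mono.
  move=> h; apply: (Cset_mono (S := fun a b => eps a = 0)); last exact: C4to1.
  by move=> a b h'; rewrite rmorphM h' mulr0.
- exact: p2.
- move=> zeta hz x; split.
    move=> hc; split; first exact: (gen_E hEgen hc).2.
    apply: gen_mono hc => y hy; apply: genP.
    exact: (G0toG5 hl hz (G5toG0 hl h1 (EtoG51 hl hy))).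
  move=> [he hg]; apply: gen_mono hg => y hy; apply: genP.
  exact: (G51toE hl (G0toG5 hl h1 (G5toG0 hl hz hy))).
- exact: ip1.
- exact: ip2.
- by move=> x [].
- by split; [exact: rmorph1 | exact: gen1].
- move=> x y [ex hx] [ey hy]; split; last exact: genM.
  by rewrite rmorphM ex ey mulr1.
- move=> x hC; have hx := Cunit x hC; case: hC => ex hg.
  by split; [exact: epsV1 | exact: genV].
- move=> x c ex hc; have hx := loc_unit1 hl ex.
  have [ec _] := hc.
  have hc4 : Cset eps (fun a b => (1 + b * a) \is a GRing.unit) c.
    by apply: Cset_mono hc => a b [_ h]; exact: u4.
  have [_ hg] := C4to1 _ hc4.
  apply: (Cset_mono (S := fun a b => eps a = 0)) => //; split.
    by rewrite !rmorphM ec mulr1 -rmorphM mulVr // rmorph1.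
  exact: (Ncj hl hx hg).
- move=> x y ex ey; have hx := loc_unit1 hl ex; have hy := loc_unit1 hl ey.
  rewrite invrM // mulrA; apply: ip2; apply: ip1; apply: genP.
  by exists y, x.
Qed.
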